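(* For every $\mathsf{C\text{-}RASP}_+$ program of size $n$, depth $d$, precision $p$ and girth $g$, there is an equivalent decomposed $\mathsf{C\text{-}RASP}_+$ program of size $O(n\,2^{\mathrm{poly}(p,g,d)})$, depth $O(d)$ and precision $O(p)$.
   Context: $\mathsf{C\text{-}RASP}_+$ formulas over a finite alphabet $\Sigma$: $\phi ::= \sigma \mid \neg\phi \mid \phi_1\wedge\phi_2 \mid \sum_{t\in\mathcal T}\alpha_t t\sim k$, terms $t ::= \#[\phi] \mid c$, with $\sigma\in\Sigma$, $\alpha_t,k,c\in\mathbb{N}$, ${\sim}\in\{\ge,>,=,<,\le\}$. Semantics at position $i$ of $w$: $w,i\models\sigma$ iff $w_i=\sigma$; Boolean connectives as usual; $\#[\phi]$ evaluates to $|\{j\in[1,i]: w,j\models\phi\}|$, $c$ to $c$, and comparisons are integer comparisons; $w\models\phi$ iff $w,|w|\models\phi$. Two programs are equivalent if they define the same language. Programs are straight-line (DAG) representations $(\phi_1,\dots,\phi_m)$ where $\phi_i$ may refer to earlier $\phi_j$; size is the total number of symbols with constants in binary and each reference counted as 1. Depth: $\mathrm{dp}(\sigma)=\mathrm{dp}(c)=0$, $\mathrm{dp}(\neg\phi)=\mathrm{dp}(\phi)$, $\mathrm{dp}(\phi_1\wedge\phi_2)=\max(\mathrm{dp}(\phi_1),\mathrm{dp}(\phi_2))$, $\mathrm{dp}(\#[\phi])=\mathrm{dp}(\phi)+1$, and the depth of a comparison is the maximal depth of its terms; the depth of a program is the maximum depth of its lines. The precision of a program is the number of bits needed to encode its largest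 constant; its girth is the maximum number of summands in any sum occurring in it. A program is decomposed if every counting formula in it has the form $\#[\phi]\ge c$ with $\phi$ decomposed and $c\in\mathbb N$. *)

(* Defs.v *)
From mathcomp Require Import all_boot.
Set Implicit Arguments. Unset Strict Implicit. Unset Printing Implicit Defensive.

Inductive cmp := CGe | CGt | CEq | CLt | CLe.

Definition cmp_eval (o : cmp) (m k : nat) : bool :=
  match o with
  | CGe => k <= m | CGt => k < m | CEq => m == k | CLt => m < k | CLe => m <= k
  end.

Definition is_CGe (o : cmp) : bool := if o is CGe then true else false.

Inductive term (F : Type) := TCount of F | TConst of nat.
Arguments TConst {F}.

Section CRASP.
Variable Sigma : eqType.

(* formulas; FRef j refers to line j (0-indexed) of the surrounding program.
   FCmp ts o k  is  sum_{(a,t) in ts} a * t  o  k. *)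
Inductive form :=
| FLet of Sigma
| FNot of form
| FAnd of form & form
| FRef of nat
| FCmp of seq (nat * term form) & cmp & nat.

Definition prog := seq form.

(* env j i = truth value of line j at position i *)
Fixpoint evf (env : nat -> nat -> bool) (w : seq Sigma) (f : form) (i : nat)
  {struct f} : bool :=
  match f with
  | FLet a => (0 < i <= size w) && (nth a w i.-1 == a)
  | FNot g => ~~ evf env w g i
  | FAnd g h => evf env w g i && evf env w h i
  | FRef j => env j i
  | FCmp ts o k =>
      let fix sumv (ts : seq (nat * term form)) : nat :=
        match ts with
        | [::] => 0
        | (a, TCount g) :: ts' =>
            a * count (fun j => evf env w g j) (iota 1 i) + sumv ts'
        | (a, TConst c) :: ts' => a * c + sumv ts'
        end in
      cmp_eval o (sumv ts) k
  end.

Definition linevals (w : seq Sigma) (P : prog) : seq (nat -> bool) :=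
  foldl (fun vs f =>
           rcons vs (evf (fun j t => nth (fun _ => false) vs j t) w f)) [::] P.

(* w |= P iff the last line holds at position |w| *)
Definition accepts (P : prog) (w : seq Sigma) : bool :=
  last (fun _ => false) (linevals w P) (size w).

Definition equiv_prog (P Q : prog) : Prop := forall w, accepts P w = accepts Q w.

Fixpoint wff (b : nat) (f : form) : bool :=
  match f with
  | FLet _ => true
  | FNot g => wff b g
  | FAnd g h => wff b g && wff b h
  | FRef j => j < b
  | FCmp ts _ _ =>
      let fix wfts (ts : seq (nat * term form)) : bool :=
        match ts with
        | [::] => true
        | (_, TCount g) :: ts' => wff b g && wfts ts'
        | (_, TConst _) :: ts' => wfts ts'
        end in wfts ts
  end.

Definition wf_prog (P : prog) : bool :=
  all (fun i => wff i (nth (FRef 0) P i)) (iota 0 (size P)).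

(* ---------- size (constants in binary, each reference counts 1) ---------- *)
Definition bits (n : nat) : nat := if n is 0 then 1 else (trunc_log 2 n).+1.

Fixpoint fsize (f : form) : nat :=
  match f with
  | FLet _ => 1
  | FNot g => (fsize g).+1
  | FAnd g h => (fsize g + fsize h).+1
  | FRef _ => 1
  | FCmp ts _ k =>
      let fix szts (ts : seq (nat * term form)) : nat :=
        match ts with
        | [::] => 0
        | (a, TCount g) :: ts' => bits a + (fsize g).+2 + szts ts'
        | (a, TConst c) :: ts' => bits a + bits c + 1 + szts ts'
        end in szts ts + 1 + bits k
  end.

Definition prog_size (P : prog) : nat := sumn (map fsize P).

Fixpoint fdepth (denv : nat -> nat) (f : form) : nat :=
  match f with
  | FLet _ => 0
  | FNot g => fdepth denv g
  | FAnd g h => maxn (fdepth denv g) (fdepth denv h)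
  | FRef j => denv j
  | FCmp ts _ _ =>
      let fix dts (ts : seq (nat * term form)) : nat :=
        match ts with
        | [::] => 0
        | (_, TCount g) :: ts' => maxn (fdepth denv g).+1 (dts ts')
        | (_, TConst _) :: ts' => dts ts'
        end in dts ts
  end.

Definition line_depths (P : prog) : seq nat :=
  foldl (fun ds f => rcons ds (fdepth (fun j => nth 0 ds j) f)) [::] P.

Definition prog_depth (P : prog) : nat := \max_(d <- line_depths P) d.

Fixpoint fmaxconst (f : form) : option nat :=
  let omax (x y : option nat) :=
      match x, y with
      | Some a, Some b => Some (maxn a b)
      | Some a, None => Some a
      | None, y => y
      end in
  match f with
  | FLet _ => None
  | FNot g => fmaxconst g
  | FAnd g h => omax (fmaxconst g) (fmaxconst h)
  | FRef _ => None
  | FCmp ts _ k =>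
      let fix cts (ts : seq (nat * term form)) : option nat :=
        match ts with
        | [::] => Some k
        | (a, TCount g) :: ts' => omax (Some a) (omax (fmaxconst g) (cts ts'))
        | (a, TConst c) :: ts' => omax (Some (maxn a c)) (cts ts')
        end in cts ts
  end.

(* precision = number of bits of the largest constant (0 if no constant occurs) *)
Definition prog_prec (P : prog) : nat :=
  \max_(f <- P) (if fmaxconst f is Some c then bits c else 0).

Fixpoint fgirth (f : form) : nat :=
  match f with
  | FLet _ => 0
  | FNot g => fgirth g
  | FAnd g h => maxn (fgirth g) (fgirth h)
  | FRef _ => 0
  | FCmp ts _ _ =>
      let fix gts (ts : seq (nat * term form)) : nat :=
        match ts with
        | [::] => 0
        | (_, TCount g) :: ts' => maxn (fgirth g) (gts ts')
        | (_, TConst _) :: ts' => gts ts'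
        end in maxn (size ts) (gts ts)
  end.

Definition prog_girth (P : prog) : nat := \max_(f <- P) fgirth f.

Fixpoint fdecomposed (f : form) : bool :=
  match f with
  | FLet _ => true
  | FNot g => fdecomposed g
  | FAnd g h => fdecomposed g && fdecomposed h
  | FRef _ => true
  | FCmp ts o _ =>
      is_CGe o &&
      match ts with
      | [:: (1, TCount g)] => fdecomposed g
      | _ => false
      end
  end.

Definition decomposed (P : prog) : bool := all fdecomposed P.

End CRASP.

(* Main.v *)
Require Import Defs.
From mathcomp Require Import all_boot zify ring.
From Stdlib Require Import FunctionalExtensionality.
Set Implicit Arguments. Unset Strict Implicit. Unset Printing Implicit Defensive.

Section S.
Variable Sigma : eqType.
Variable a0 : Sigma.
Local Notation form := (form Sigma).

Fixpoint AllC (Q : form -> Prop) (ts : seq (nat * term form)) : Prop :=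
  match ts with
  | [::] => True
  | (_, TCount g) :: ts' => Q g /\ AllC Q ts'
  | (_, TConst _) :: ts' => AllC Q ts'
  end.

Section Ind.
Variable Q : form -> Prop.
Hypothesis HLet : forall b, Q (FLet b).
Hypothesis HNot : forall g, Q g -> Q (FNot g).
Hypothesis HAnd : forall g h, Q g -> Q h -> Q (FAnd g h).
Hypothesis HRef : forall j, Q (FRef Sigma j).
Hypothesis HCmp : forall ts o k, AllC Q ts -> Q (FCmp ts o k).
Fixpoint form_ind' (f : form) : Q f :=
  match f with
  | FLet b => HLet b
  | FNot g => HNot (form_ind' g)
  | FAnd g h => HAnd (form_ind' g) (form_ind' h)
  | FRef j => HRef j
  | FCmp ts o k => HCmp o k
      ((fix go (ts : seq (nat * term form)) : AllC Q ts :=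
         match ts return AllC Q ts with
         | [::] => I
         | (_, TCount g) :: ts' => conj (form_ind' g) (go ts')
         | (_, TConst _) :: ts' => go ts'
         end) ts)
  end.
End Ind.

Definition FALSE : form := FAnd (FLet a0) (FNot (FLet a0)).
Definition TRUE : form := FNot FALSE.
Definition OR (x y : form) : form := FNot (FAnd (FNot x) (FNot y)).
Definition bigor (l : seq form) : form := foldr OR FALSE l.
Definition cnt (g : form) (c : nat) : form := FCmp [:: (1, TCount g)] CGe c.
Definition exact (g : form) (v : nat) : form := FAnd (cnt g v) (FNot (cnt g v.+1)).

Fixpoint dec (K : nat) (ts : seq (nat * term form)) (P : nat -> bool) : form :=
  match ts with
  | [::] => if P 0 then TRUE else FALSE
  | (a, TConst c) :: ts' => dec K ts' (fun s => P (a * c + s))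
  | (a, TCount g) :: ts' =>
      bigor (FAnd (cnt g K) (dec K ts' (fun s => P (a * K + s))) ::
             map (fun v => FAnd (exact g v) (dec K ts' (fun s => P (a * v + s)))) (iota 0 K))
  end.

Fixpoint tr (f : form) : form :=
  match f with
  | FLet b => FLet b
  | FNot g => FNot (tr g)
  | FAnd g h => FAnd (tr g) (tr h)
  | FRef j => FRef Sigma j
  | FCmp ts o k =>
      dec k.+1 ((fix mt (ts : seq (nat * term form)) :=
                  match ts with
                  | [::] => [::]
                  | (a, TCount g) :: ts' => (a, TCount (tr g)) :: mt ts'
                  | (a, TConst c) :: ts' => (a, TConst c) :: mt ts'
                  end) ts) (fun s => cmp_eval o s k)
  end.

Fixpoint mt (ts : seq (nat * term form)) :=
  match ts with
  | [::] => [::]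
  | (a, TCount g) :: ts' => (a, TCount (tr g)) :: mt ts'
  | (a, TConst c) :: ts' => (a, TConst c) :: mt ts'
  end.

Lemma tr_cmp ts o k : tr (FCmp ts o k) = dec k.+1 (mt ts) (fun s => cmp_eval o s k).
Proof. rewrite /=; congr dec; elim: ts => //= [[a [g|c]] ts ->] //. Qed.

Section Sem.
Variables (env : nat -> nat -> bool) (w : seq Sigma).

Fixpoint sumv (i : nat) (ts : seq (nat * term form)) : nat :=
  match ts with
  | [::] => 0
  | (a, TCount g) :: ts' => a * count (fun j => evf env w g j) (iota 1 i) + sumv i ts'
  | (a, TConst c) :: ts' => a * c + sumv i ts'
  end.

Lemma evf_cmp ts o k i : evf env w (FCmp ts o k) i = cmp_eval o (sumv i ts) k.
Proof. rewrite /=; congr cmp_eval; elim: ts => //= [[a [g|c]] ts ->] //. Qed.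

Fixpoint sumc (K i : nat) (ts : seq (nat * term form)) : nat :=
  match ts with
  | [::] => 0
  | (a, TCount g) :: ts' => a * minn (count (fun j => evf env w g j) (iota 1 i)) K + sumc K i ts'
  | (a, TConst c) :: ts' => a * c + sumc K i ts'
  end.

Lemma evf_FALSE i : evf env w FALSE i = false.
Proof. by rewrite /= andbN. Qed.
Lemma evf_TRUE i : evf env w TRUE i = true.
Proof. by rewrite /TRUE /= andbN. Qed.
Lemma evf_bigor l i : evf env w (bigor l) i = has (fun f => evf env w f i) l.
Proof.
elim: l => [|f l IH]; first exact: evf_FALSE.
by rewrite /= -IH; case: (evf env w f i); case: (evf env w (bigor l) i).
Qed.
Lemma evf_cnt g c i : evf env w (cnt g c) i = (c <= count (fun j => evf env w g j) (iota 1 i)).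
Proof. by rewrite /cnt evf_cmp /= mul1n addn0. Qed.

Lemma has_eq_and (x : nat) (Q : nat -> bool) s :
  has (fun v => (x == v) && Q v) s = (x \in s) && Q x.
Proof.
elim: s => //= v s ->; rewrite in_cons; case: eqP => [->|] //=.
by case: (Q v) => //=; case: (v \in s).
Qed.

Lemma dec_ok K ts P i : evf env w (dec K ts P) i = P (sumc K i ts).
Proof.
elim: ts P => [|[a [g|c]] ts IH] P.
- by rewrite /=; case: (P 0); [rewrite evf_TRUE | rewrite evf_FALSE].
- have -> : dec K ((a, TCount g) :: ts) P = bigor (FAnd (cnt g K) (dec K ts (fun s => P (a * K + s))) ::
             map (fun v => FAnd (exact g v) (dec K ts (fun s => P (a * v + s)))) (iota 0 K)) by [].
  rewrite evf_bigor [has _ (_ :: _)]/= has_map mul1n addn0 IH [sumc _ _ _]/=.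
  set x := count _ (iota 1 i).
  have -> : has (preim (fun v => FAnd (exact g v) (dec K ts (fun s => P (a * v + s)))) (fun f => evf env w f i)) (iota 0 K)
          = has (fun v => (x == v) && P (a * v + sumc K i ts)) (iota 0 K).
    apply: eq_has => v /=; rewrite IH mul1n addn0 -/x -leqNgt -eqn_leq eq_sym //.
  rewrite has_eq_and mem_iota add0n.
  case: (ltnP x K) => hx.
  + by rewrite /= -/x (minn_idPl (ltnW hx)).
  + by rewrite /= -/x (minn_idPr hx) orbF.
- by rewrite /= IH.
Qed.


End Sem.

Lemma cap o a x K k y : K = k.+1 ->
  cmp_eval o (a * minn x K + y) k = cmp_eval o (a * x + y) k.
Proof.
move=> ->; case: (leqP x k.+1) => hx //.
case: a => [|a]; first by rewrite !mul0n.
have h1 : k < a.+1 * k.+1 + y by nia.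
have h2 : k < a.+1 * x + y by nia.
case: o => /=.
- by rewrite (ltnW h1) (ltnW h2).
- by rewrite h1 h2.
- by rewrite (gtn_eqF h1) (gtn_eqF h2).
- by rewrite ltnNge (ltnW h1) ltnNge (ltnW h2).
- by rewrite leqNgt h1 leqNgt h2.
Qed.

Lemma evf_tr env w f i : evf env w (tr f) i = evf env w f i.
Proof.
elim/form_ind': f i => [b|g IH|g h IHg IHh|j|ts o k IH] i; first by [].
- by rewrite /= IH.
- by rewrite /= IHg IHh.
- by [].
rewrite tr_cmp dec_ok evf_cmp.
rewrite -[sumc _ _ _ _ _]addn0 -[sumv _ _ _ _]addn0.
elim: ts IH 0 => [|[a [g|c]] ts IHts] //= IH y.
- case: IH => IHg IH.
  have -> : count (fun j => evf env w (tr g) j) (iota 1 i) = count (fun j => evf env w g j) (iota 1 i).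
    by apply: eq_count => j; rewrite IHg.
  by rewrite -!addnA (addnCA (a * minn _ _)) IHts // addnCA (cap _ _ _ _ erefl).
- by rewrite -!addnA (addnCA (a * c)) IHts // addnCA.
Qed.

Lemma AllC_mt Q ts : AllC Q (mt ts) <-> AllC (fun g => Q (tr g)) ts.
Proof. elim: ts => [|[a [g|c]] ts IH] //=; by rewrite IH. Qed.

Lemma AllC_impl (Q1 Q2 : form -> Prop) ts :
  AllC Q1 ts -> (forall g, Q1 g -> Q2 g) -> AllC Q2 ts.
Proof. move=> + H; elim: ts => [|[a [g|c]] ts IH] //= => [[]]; split; auto. Qed.

Lemma AllC_and (Q1 Q2 : form -> Prop) ts :
  AllC Q1 ts -> AllC Q2 ts -> AllC (fun g => Q1 g /\ Q2 g) ts.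
Proof. elim: ts => [|[a [g|c]] ts IH] //= => [[? ?] [? ?]]; split; auto. Qed.

Lemma dec_closed (G H : form -> Prop) K :
  G FALSE -> (forall x, G x -> G (FNot x)) ->
  (forall x y, G x -> G y -> G (FAnd x y)) ->
  (forall g c, c <= K -> H g -> G (cnt g c)) ->
  forall ts P, AllC H ts -> G (dec K ts P).
Proof.
move=> GF GN GA GC; have GT : G TRUE by apply GN.
have GOR : forall x y, G x -> G y -> G (OR x y).
  by move=> x y hx hy; apply GN; apply GA; apply GN.
have GO : forall (F : nat -> form) (s : seq nat), (forall v, v \in s -> G (F v)) -> G (bigor (map F s)).
  move=> F; elim=> [|v s IH] Hl //=; apply GOR.
  - by apply Hl; rewrite mem_head.
  - by apply IH => y hy; apply Hl; rewrite in_cons hy orbT.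
elim=> [|[a [g|c]] ts IH] P /=.
- by case: (P 0).
- move=> [Hg Hts]; apply GOR.
  + by apply GA; [apply GC | apply IH].
  + apply GO => v; rewrite mem_iota add0n => /andP[_ hv]; apply GA; last by apply IH.
    by apply GA; [apply GC => //; apply: ltnW | apply GN; apply GC].
- by move=> Hts; apply IH.
Qed.

Lemma wff_cmp b ts o k : wff b (FCmp ts o k) <-> AllC (fun g => wff b g) ts.
Proof.
rewrite /=; elim: ts => [|[a [g|c]] ts IH] //=.
rewrite -IH; split; [by move/andP | by case=> -> ->].
Qed.

Lemma wff_tr b f : wff b f -> wff b (tr f).
Proof.
elim/form_ind': f => [x|g IH|g h IHg IHh|j|ts o k IH] //.
- by move=> /= /andP[/IHg -> /IHh ->].
- move/wff_cmp => H; rewrite tr_cmp; apply: (dec_closed (G := fun f => wff b f) (H := fun g => wff b g)) => //.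
  + by move=> x y /= -> ->.
  + by move=> g c _ /= ->.
  + apply/AllC_mt; apply: AllC_impl (AllC_and IH H) _ => g [h1 h2]; exact: h1 h2.
Qed.

Lemma dec_tr f : fdecomposed (tr f).
Proof.
elim/form_ind': f => [x|g IH|g h IHg IHh|j|ts o k IH] //=.
- by rewrite IHg IHh.
- rewrite -/(tr (FCmp ts o k)) tr_cmp; apply: (dec_closed (G := fun f => fdecomposed f) (H := fun g => fdecomposed g)) => //.
  + by move=> x y /= -> ->.
  + by apply/AllC_mt.
Qed.

Lemma depth_cmp denv ts o k m :
  fdepth denv (FCmp ts o k) <= m <-> AllC (fun g => (fdepth denv g).+1 <= m) ts.
Proof.
rewrite /=; elim: ts => [|[a [g|c]] ts IH] //=.
rewrite geq_max -IH; split; [by move/andP | by case=> -> ->].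
Qed.

Lemma depth_mono d1 d2 (f : form) : (forall j, d1 j <= d2 j) -> fdepth d1 f <= fdepth d2 f.
Proof.
move=> Hd; elim/form_ind': f => [x|g IH|g h IHg IHh|j|ts o k IH] //.
- by rewrite /= geq_max !leq_max IHg IHh orbT.
- exact: Hd.
- apply/depth_cmp; have /depth_cmp H := leqnn (fdepth d2 (FCmp ts o k)).
  apply: AllC_impl (AllC_and IH H) _ => g [h1 h2]; exact: leq_ltn_trans h1 h2.
Qed.

Lemma depth_tr denv (f : form) : fdepth denv (tr f) <= fdepth denv f.
Proof.
elim/form_ind': f => [x|g IH|g h IHg IHh|j|ts o k IH] //.
- by rewrite /= geq_max !leq_max IHg IHh orbT.
- rewrite tr_cmp.
  have /depth_cmp H := leqnn (fdepth denv (FCmp ts o k)).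
  apply: (dec_closed (G := fun f => fdepth denv f <= fdepth denv (FCmp ts o k)) (H := fun g => (fdepth denv g).+1 <= fdepth denv (FCmp ts o k))) => //.
  + by move=> x y /= h1 h2; rewrite geq_max h1 h2.
  + apply/AllC_mt; apply: AllC_impl (AllC_and IH H) _ => g [h1 h2]; exact: leq_ltn_trans h1 h2.
Qed.

Definition cb B (f : form) := forall c, fmaxconst f = Some c -> c <= B.

Lemma cmp_some (ts : seq (nat * term form)) o k : exists c', fmaxconst (FCmp ts o k) = Some c'.
Proof.
rewrite /=; elim: ts => [|[a [g|c]] ts [c' IH]] /=; first by eauto.
- rewrite IH; case: (fmaxconst g) => [x|]; eauto.
- rewrite IH; eauto.
Qed.

Lemma cb_mono B1 B2 (f : form) : B1 <= B2 -> cb B1 f -> cb B2 f.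
Proof. by move=> h H c /H /leq_trans; apply. Qed.

Lemma AllC_cb_mono B1 B2 ts : B1 <= B2 -> AllC (cb B1) ts -> AllC (cb B2) ts.
Proof. by move=> h H; apply: AllC_impl H _ => g; apply: cb_mono. Qed.

Lemma cmp_bound (ts : seq (nat * term form)) o k c' : fmaxconst (FCmp ts o k) = Some c' ->
  k <= c' /\ AllC (cb c') ts.
Proof.
elim: ts c' => [|[a [g|c]] ts IH] c'.
- by case=> ->.
- have [c0 e] := cmp_some ts o k; have [h1 h2] := IH _ e.
  rewrite /= in e; rewrite /= e.
  case E: (fmaxconst g) => [x|] [<-].
  + split; first by rewrite !leq_max h1 !orbT.
    split; first by move=> c; rewrite E => -[<-]; rewrite !leq_max leqnn !orbT.
    by apply: AllC_cb_mono h2; rewrite !leq_max leqnn !orbT.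
  + split; first by rewrite !leq_max h1 !orbT.
    split; first by move=> c; rewrite E.
    by apply: AllC_cb_mono h2; rewrite !leq_max leqnn !orbT.
- have [c0 e] := cmp_some ts o k; have [h1 h2] := IH _ e.
  rewrite /= in e; rewrite /= e => -[<-].
  split; first by rewrite !leq_max h1 !orbT.
  by apply: AllC_cb_mono h2; rewrite !leq_max leqnn !orbT.
Qed.

Lemma cb_dec B K ts P : 0 < B -> K <= B -> AllC (cb B) ts -> cb B (dec K ts P).
Proof.
move=> hB hK; apply: (dec_closed (G := cb B) (H := cb B)).
- by [].
- by [].
- move=> x y hx hy c /=.
  case Ex: (fmaxconst x) => [u|]; case Ey: (fmaxconst y) => [v|] //= [<-].
  + by rewrite geq_max (hx _ Ex) (hy _ Ey).
  + exact: hx.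
  + exact: hy.
- move=> g c hc hg d /=.
  case Eg: (fmaxconst g) => [u|] /= [<-]; rewrite !geq_max hB (leq_trans hc hK) ?(hg _ Eg) //.
Qed.

Lemma prec_tr (f : form) c : fmaxconst (tr f) = Some c ->
  exists2 c', fmaxconst f = Some c' & c <= c'.+1.
Proof.
elim/form_ind': f c => [x|g IH|g h IHg IHh|j|ts o k IH] c //.
- exact: IH.
- rewrite /=.
  case Eg: (fmaxconst (tr g)) => [u|]; case Eh: (fmaxconst (tr h)) => [v|] //= [<-].
  + have [u' -> hu] := IHg _ Eg; have [v' -> hv] := IHh _ Eh.
    by exists (maxn u' v') => //; rewrite geq_max; apply/andP; split; [apply: leq_trans hu _|apply: leq_trans hv _]; rewrite ltnS leq_max leqnn ?orbT.
  + have [u' -> hu] := IHg _ Eg.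
    case: (fmaxconst h) => [v'|]; [exists (maxn u' v') | exists u'] => //.
    by apply: leq_trans hu _; rewrite ltnS leq_max leqnn.
  + have [v' -> hv] := IHh _ Eh.
    case: (fmaxconst g) => [u'|]; [exists (maxn u' v') | exists v'] => //.
    by apply: leq_trans hv _; rewrite ltnS leq_max leqnn orbT.
- have [c' e] := cmp_some ts o k; have [hk hts] := cmp_bound e.
  rewrite tr_cmp => /cb_dec H; exists c' => //; apply: H => //.
  apply/AllC_mt; apply: AllC_impl (AllC_and IH hts) _ => g [h1 h2] d /h1 [d' /h2 hd' hd].
  exact: leq_trans hd _.
Qed.

Lemma bits_le n : bits n <= n.+1.
Proof.
case: n => [|n] //; rewrite /bits.
have h1 := @trunc_logP 2 n.+1 erefl erefl.
have h2 := ltn_expl (trunc_log 2 n.+1) (erefl : 1 < 2).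
move: h1 h2; set t := trunc_log 2 n.+1; set u := 2 ^ t; lia.
Qed.

Lemma fsize_gt0 (f : form) : 0 < fsize f.
Proof. by case: f => //= ts o k; rewrite addn1 addSn. Qed.

Fixpoint szts (ts : seq (nat * term form)) : nat :=
  match ts with
  | [::] => 0
  | (a, TCount g) :: ts' => bits a + (fsize g).+2 + szts ts'
  | (a, TConst c) :: ts' => bits a + bits c + 1 + szts ts'
  end.

Lemma fsize_cmp ts o k : fsize (FCmp ts o k) = szts ts + 1 + bits k.
Proof. rewrite /=; congr (_ + _ + _); elim: ts => [|[a [g|c]] ts IH] //=; by rewrite IH. Qed.

Fixpoint W (K : nat) (ts : seq (nat * term form)) : nat :=
  match ts with
  | [::] => 0
  | (a, TCount g) :: ts' => 2 * fsize g + 2 * K + 17 + W K ts'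
  | (a, TConst c) :: ts' => W K ts'
  end.

Lemma fsize_bigor l : fsize (bigor l) = sumn (map (fun x => fsize x + 4) l) + 4.
Proof. elim: l => [|x l IH] //=; rewrite IH; lia. Qed.

Lemma sumn_bound (F : nat -> nat) s X : (forall v, v \in s -> F v <= X) -> sumn (map F s) <= size s * X.
Proof.
elim: s => [|v s IH] H //=; rewrite mulSn leq_add //.
- by apply: H; rewrite mem_head.
- by apply: IH => u hu; apply: H; rewrite in_cons hu orbT.
Qed.

Lemma fsize_cnt g c : fsize (cnt g c) = fsize g + 4 + bits c.
Proof. rewrite /cnt fsize_cmp /= /bits trunc_log1. lia. Qed.

Lemma fsize_and (x y : form) : fsize (FAnd x y) = (fsize x + fsize y).+1.
Proof. by []. Qed.
Lemma fsize_not (x : form) : fsize (FNot x) = (fsize x).+1.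
Proof. by []. Qed.
Lemma fsize_exact g v : fsize (exact g v) = (fsize (cnt g v) + (fsize (cnt g v.+1)).+1).+1.
Proof. by []. Qed.

Lemma size_dec K ts P : fsize (dec K ts P) <= (K + 5) ^ (size ts) * (5 + W K ts).
Proof.
elim: ts P => [|[a [g|c]] ts IH] P.
- by rewrite /=; case: (P 0).
- have -> : dec K ((a, TCount g) :: ts) P = bigor (FAnd (cnt g K) (dec K ts (fun s => P (a * K + s))) ::
             map (fun v => FAnd (exact g v) (dec K ts (fun s => P (a * v + s)))) (iota 0 K)) by [].
  rewrite fsize_bigor map_cons [sumn _]/= -map_comp.
  set D := (K + 5) ^ size ts * (5 + W K ts).
  have h1 : fsize (FAnd (cnt g K) (dec K ts (fun s => P (a * K + s)))) + 4 <= fsize g + K + 10 + D.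
    rewrite fsize_and fsize_cnt; have := IH (fun s => P (a * K + s)); have := bits_le K; lia.
  have h2 : sumn (map ((fun x => fsize x + 4) \o (fun v => FAnd (exact g v) (dec K ts (fun s => P (a * v + s))))) (iota 0 K))
            <= K * (2 * fsize g + 2 * K + 16 + D).
    rewrite -[K in K * _](size_iota 0 K); apply: sumn_bound => v; rewrite mem_iota add0n => /andP[_ hv].
    change (fsize (FAnd (exact g v) (dec K ts (fun s => P (a * v + s)))) + 4 <= 2 * fsize g + 2 * K + 16 + D); rewrite fsize_and fsize_exact !fsize_cnt; have := IH (fun s => P (a * v + s)); have := bits_le v; have := bits_le v.+1; lia.
  move: h1 h2; set S1 := fsize (FAnd _ _) + 4; set S2 := sumn _.
  rewrite [size _]/= [W _ _]/= expnS.
  have hE : 0 < (K + 5) ^ size ts by rewrite expn_gt0 addnS ltn0Sn.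
  move: hE; rewrite /D; clearbody S1 S2; set E := (K + 5) ^ size ts; clearbody E D; nia.
- rewrite [dec _ _ _]/= [W _ _]/= [size _]/= expnS.
  apply: leq_trans (IH _) _; rewrite -mulnA leq_pmull //. by rewrite addnS.
Qed.

Section Bnd.
Variables (K0 G : nat).
Fixpoint bnd (f : form) : Prop :=
  match f with
  | FLet _ => True
  | FNot g => bnd g
  | FAnd g h => bnd g /\ bnd h
  | FRef _ => True
  | FCmp ts o k => k < K0 /\ size ts <= G /\
      (fix go (ts : seq (nat * term form)) : Prop :=
         match ts with
         | [::] => True
         | (_, TCount g) :: ts' => bnd g /\ go ts'
         | (_, TConst _) :: ts' => go ts'
         end) ts
  end.

Lemma bnd_cmp ts o k : bnd (FCmp ts o k) <-> k < K0 /\ size ts <= G /\ AllC bnd ts.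
Proof.
rewrite /=; split => -[h1 [h2 h3]]; do 2!split => //; move: h3;
  by elim: ts {h2} => [|[a [g|c]] ts IH] //= [? /IH ?].
Qed.
End Bnd.

Lemma expn_monob m1 m2 e : m1 <= m2 -> m1 ^ e <= m2 ^ e.
Proof. by move=> h; elim: e => // e IH; rewrite !expnS leq_mul. Qed.

Lemma size_mt ts : size (mt ts) = size ts.
Proof. by elim: ts => [|[a [g|c]] ts IH] //=; rewrite IH. Qed.

Lemma W_bound K A ts : 0 < A -> AllC (fun g => fsize (tr g) <= fsize g * A) ts ->
  W K (mt ts) <= (2 * A + 2 * K + 17) * szts ts.
Proof.
move=> hA; elim: ts => [|[a [g|c]] ts IH] //=.
- move=> [hg /IH hts]; have := fsize_gt0 g; move: hg hts.
  set s := fsize g; set t := fsize (tr g); set u := W K (mt ts); set v := szts ts; nia.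
- move=> /IH hts; nia.
Qed.

Lemma size_tr K0 G n f : bnd K0 G f -> fdepth (fun _ => 0) f <= n ->
  fsize (tr f) <= fsize f * ((K0 + 5) ^ G * (2 * K0 + 24)) ^ n.+1.
Proof.
set M := (K0 + 5) ^ G * (2 * K0 + 24).
have hM : 0 < M by rewrite muln_gt0 expn_gt0 addnS ltn0Sn addnS.
elim/form_ind': f n => [x|g IH|g h IHg IHh|j|ts o k IH] n.
- by move=> _ _; rewrite mul1n expn_gt0 hM.
- move=> /= hb hd; have := IH n hb hd; have := expn_gt0 M n.+1; rewrite hM /=.
  set t := fsize (tr g); set s := fsize g; set E := M ^ n.+1; nia.
- move=> /= [hbg hbh]; rewrite geq_max => /andP[hdg hdh].
  have := IHg n hbg hdg; have := IHh n hbh hdh.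
  have : 0 < M ^ n.+1 by rewrite expn_gt0 hM.
  set E := M ^ n.+1; set t1 := fsize (tr g); set t2 := fsize (tr h); set s1 := fsize g; set s2 := fsize h; nia.
- by move=> _ _; rewrite mul1n expn_gt0 hM.
- move=> /bnd_cmp [hk [hG hb]] /depth_cmp hd.
  have hA : AllC (fun g => fsize (tr g) <= fsize g * M ^ n) ts.
    apply: AllC_impl (AllC_and IH (AllC_and hb hd)) _ => g [IHg [hbg hdg]].
    have hn : 0 < n := leq_ltn_trans (leq0n _) hdg.
    rewrite -(prednK hn); apply: IHg => //; by rewrite -ltnS prednK.
  have hMn : 0 < M ^ n by rewrite expn_gt0 hM.
  have hW := W_bound k.+1 hMn hA.
  rewrite tr_cmp fsize_cmp; apply: leq_trans (size_dec _ _ _) _.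
  rewrite size_mt.
  have hP : (k.+1 + 5) ^ size ts <= (K0 + 5) ^ G.
    have h1 : k.+1 + 5 <= K0 + 5 by rewrite leq_add2r.
    apply: leq_trans (expn_monob (size ts) h1) _.
    by apply: leq_pexp2l => //; rewrite addnS.
  rewrite expnS /M; move: hW hP hMn hk.
  set A := M ^ n; set P1 := (k.+1 + 5) ^ size ts; set P2 := (K0 + 5) ^ G.
  set Wv := W _ _; set S := szts ts; set b := bits k.
  clearbody A P1 P2 Wv S b M => hW hP hA1 hk.
  have e1 : 5 + Wv <= (S + 1) * (A * (2 * K0 + 24)).
    apply: leq_trans (_ : _ <= (S + 1) * (2 * A + 2 * k + 24)) _; first nia.
    by rewrite leq_mul2l; apply/orP; right; nia.
  apply: leq_trans (leq_mul hP e1) _.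
  have e2 : P2 * ((S + 1) * (A * (2 * K0 + 24))) = (S + 1) * (P2 * (2 * K0 + 24) * A) by ring.
  rewrite e2 leq_mul2r leq_addr orbT //.
Qed.

Lemma girth_cmp ts o k m : fgirth (FCmp ts o k) <= m <-> size ts <= m /\ AllC (fun g => fgirth g <= m) ts.
Proof.
rewrite /= geq_max; split => [/andP[-> h] | [-> h]] /=.
- split => //; move: h; elim: ts {o k} => [|[a [g|c]] ts IH] //=; rewrite geq_max => /andP[-> /IH] //.
- move: h; elim: ts {o k} => [|[a [g|c]] ts IH] //= => [[h1 /IH h2]] //; by rewrite geq_max h1 h2.
Qed.

Lemma bits_lt c : c < 2 ^ bits c.
Proof. case: c => [|c] //; exact: trunc_log_ltn. Qed.

Lemma bnd_of K0 G (f : form) : (forall c, fmaxconst f = Some c -> c < K0) -> fgirth f <= G -> bnd K0 G f.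
Proof.
elim/form_ind': f => [x|g IH|g h IHg IHh|j|ts o k IH].
- by [].
- by move=> hc /= hg; apply: IH.
- move=> hc; rewrite /= geq_max => /andP[h1 h2]; split.
  + apply: IHg => // c Ec; move: hc; rewrite /= Ec.
    case: (fmaxconst h) => [v|] hc; [exact: leq_ltn_trans (leq_maxl c v) (hc _ erefl) | exact: hc _ erefl].
  + apply: IHh => // c Ec; move: hc; rewrite /= Ec.
    case: (fmaxconst g) => [v|] hc; [exact: leq_ltn_trans (leq_maxr v c) (hc _ erefl) | exact: hc _ erefl].
- by [].
- move=> hc /girth_cmp [hs hg]; apply/bnd_cmp.
  have [c' e] := cmp_some ts o k; have [hk hts] := cmp_bound e.
  have hc' := hc _ e.
  split; first exact: leq_ltn_trans hk hc'.
  split => //.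
  apply: AllC_impl (AllC_and IH (AllC_and hts hg)) _ => g [IHg [hcg hgg]].
  apply: IHg => // c /hcg hc2; exact: leq_ltn_trans hc2 hc'.
Qed.

Fixpoint AllL (Q : form -> Prop) (P : seq form) : Prop :=
  match P with [::] => True | f :: P' => Q f /\ AllL Q P' end.

Lemma linevals_tr w (P : prog Sigma) : linevals w (map tr P) = linevals w P.
Proof.
rewrite /linevals; elim: P [::] => //= f P IH vs; rewrite IH; congr foldl; congr rcons.
by apply: functional_extensionality => t; exact: evf_tr.
Qed.

Lemma equiv_tr (P : prog Sigma) : equiv_prog P (map tr P).
Proof. by move=> w; rewrite /accepts linevals_tr. Qed.

Lemma wf_tr (P : prog Sigma) : wf_prog P -> wf_prog (map tr P).
Proof.
move=> /allP H; apply/allP => i; rewrite size_map => hi.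
have := H i hi; rewrite mem_iota add0n in hi.
by rewrite (nth_map (FRef Sigma 0)) //; apply: wff_tr.
Qed.

Lemma decomposed_tr (P : prog Sigma) : decomposed (map tr P).
Proof. by elim: P => //= f P IH; rewrite dec_tr. Qed.

Definition dstep (ds : seq nat) (f : form) := rcons ds (fdepth (fun j => nth 0 ds j) f).

Lemma ld_rel (P : prog Sigma) ds1 ds2 : size ds1 = size ds2 -> (forall j, nth 0 ds1 j <= nth 0 ds2 j) ->
  size (foldl dstep ds1 (map tr P)) = size (foldl dstep ds2 P) /\
  forall j, nth 0 (foldl dstep ds1 (map tr P)) j <= nth 0 (foldl dstep ds2 P) j.
Proof.
elim: P ds1 ds2 => [|f P IH] ds1 ds2 hs hn //=.
apply: IH; first by rewrite /dstep !size_rcons hs.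
move=> j; rewrite /dstep !nth_rcons hs; case: ifP => // _; case: ifP => // _.
apply: leq_trans (depth_tr _ _) _; exact: depth_mono.
Qed.

Lemma depth_prog_tr (P : prog Sigma) : prog_depth (map tr P) <= prog_depth P.
Proof.
rewrite /prog_depth /line_depths -/dstep.
have [hs hn] := ld_rel P (ds1 := [::]) (ds2 := [::]) erefl (fun j => leqnn _).
set r1 := foldl _ _ _; set r2 := foldl _ _ _.
apply/bigmax_leqP_seq => d hd _.
rewrite -(nth_index 0 hd); apply: leq_trans (hn _) _.
apply: (leq_bigmax_seq (F := id)) => //; apply: mem_nth; rewrite -hs index_mem //.
Qed.

Lemma lines_depth (P : prog Sigma) ds :
  (forall x, x \in ds -> x \in foldl dstep ds P) /\
  AllL (fun f => exists denv, fdepth denv f \in foldl dstep ds P) P.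
Proof.
elim: P ds => [|f P IH] ds //=; split.
- move=> x hx; apply: (proj1 (IH _)); rewrite /dstep mem_rcons in_cons hx orbT //.
- split; last exact: (proj2 (IH _)).
  exists (fun j => nth 0 ds j); apply: (proj1 (IH _)); rewrite /dstep mem_rcons mem_head //.
Qed.

Lemma AllL_impl (Q1 Q2 : form -> Prop) P : AllL Q1 P -> (forall f, Q1 f -> Q2 f) -> AllL Q2 P.
Proof. by move=> + H; elim: P => //= f P IH [/H ? /IH ?]. Qed.

Lemma lines_depth_bound (P : prog Sigma) : AllL (fun f => fdepth (fun _ => 0) f <= prog_depth P) P.
Proof.
apply: AllL_impl (proj2 (lines_depth P [::])) _ => f [denv hd].
apply: leq_trans (depth_mono (d2 := denv) _ _) _ => //.
exact: (leq_bigmax_seq (F := id)).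
Qed.

Lemma bigmax_AllL (F : form -> nat) (P : seq form) : AllL (fun f => F f <= \max_(g <- P) F g) P.
Proof.
elim: P => //= f P IH; rewrite big_cons leq_maxl; split => //.
apply: AllL_impl IH _ => g h; exact: leq_trans h (leq_maxr _ _).
Qed.

Lemma bigmax_le (F : form -> nat) (P : seq form) m : AllL (fun f => F f <= m) P -> \max_(g <- P) F g <= m.
Proof. elim: P => [|f P IH] /=; first by rewrite big_nil. by move=> [h1 /IH h2]; rewrite big_cons geq_max h1. Qed.

Lemma sumn_le (F1 F2 : form -> nat) (P : seq form) : AllL (fun f => F1 f <= F2 f) P -> sumn (map F1 P) <= sumn (map F2 P).
Proof. elim: P => //= f P IH [h1 /IH h2]; exact: leq_add. Qed.
End S.

Lemma bits_gt0 n : 0 < bits n.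
Proof. by case: n. Qed.

Lemma bits_mono m n : m <= n -> bits m <= bits n.
Proof.
case: m => [|m] h; first exact: bits_gt0.
case: n h => [|n] // h; rewrite /bits ltnS; exact: leq_trunc_log.
Qed.

Lemma bits_S n : bits n.+1 <= (bits n).+1.
Proof.
case: n => [|n] //.
apply: leq_trans (bits_mono (_ : n.+2 <= (n.+1).*2)) _; first by rewrite -addnn addnS ltnS addSn ltnS leq_addl.
rewrite /bits; case E: (n.+1).*2 => [|m]; first by rewrite doubleS in E.
by rewrite -E trunc_log2_double.
Qed.

Definition precf (Sigma : eqType) (f : form Sigma) := if fmaxconst f is Some c then bits c else 0.

Lemma prec_prog_tr (Sigma : eqType) (a0 : Sigma) (P : prog Sigma) : prog_prec (map (tr a0) P) <= 2 * prog_prec P.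
Proof.
rewrite /prog_prec big_map; apply: bigmax_le.
apply: AllL_impl (bigmax_AllL (fun f => if fmaxconst f is Some c then bits c else 0) P) _ => f h.
case E: (fmaxconst (tr a0 f)) => [c|] //.
have [c' E' hc] := prec_tr E; rewrite E' in h.
apply: leq_trans (bits_mono hc) _; apply: leq_trans (bits_S _) _.
have := bits_gt0 c'; lia.
Qed.

Lemma AllL_and (Sigma : eqType) (Q1 Q2 : form Sigma -> Prop) P : AllL Q1 P -> AllL Q2 P -> AllL (fun f => Q1 f /\ Q2 f) P.
Proof. by elim: P => //= f P IH [? ?] [? ?]; split; auto. Qed.

Lemma sumn_mulr (Sigma : eqType) (F : form Sigma -> nat) E (P : seq (form Sigma)) :
  sumn (map (fun f => F f * E) P) = sumn (map F P) * E.
Proof. by elim: P => //= f P ->; rewrite mulnDl. Qed.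

Theorem lemma4p2 :
  exists (C e : nat),
  forall (Sigma : finType) (P : prog Sigma),
    0 < #|Sigma| ->
    wf_prog P ->
    exists P' : prog Sigma,
      [/\ wf_prog P' && decomposed P', equiv_prog P P',
          prog_size P' <= C * prog_size P *
              2 ^ (C * (prog_prec P + prog_girth P + prog_depth P).+1 ^ e),
          prog_depth P' <= C * prog_depth P
        & prog_prec P' <= C * prog_prec P].
Proof.
exists 8, 3 => Sigma P /card_gt0P [a0 _] hwf.
exists (map (tr a0) P); split.
- by rewrite wf_tr // decomposed_tr.
- exact: equiv_tr.
- set p := prog_prec P; set g := prog_girth P; set d := prog_depth P.
  set M := (2 ^ p + 5) ^ g * (2 * 2 ^ p + 24).
  have hl : AllL (fun f => fsize (tr a0 f) <= fsize f * M ^ d.+1) P.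
    have H1 := bigmax_AllL (fun f => if fmaxconst f is Some c then bits c else 0) P.
    have H2 := bigmax_AllL (@fgirth _) P.
    have H3 := lines_depth_bound P.
    apply: AllL_impl (AllL_and H1 (AllL_and H2 H3)) _ => f [h1 [h2 h3]].
    apply: size_tr h3; apply: bnd_of h2 => c E; rewrite E in h1.
    apply: leq_trans (bits_lt c) _; exact: leq_pexp2l.
  rewrite /prog_size -map_comp.
  apply: leq_trans (sumn_le hl) _; rewrite sumn_mulr -/(prog_size P).
  have hM : M ^ d.+1 <= 2 ^ (8 * (p + g + d).+1 ^ 3).
    have e1 : M <= 2 ^ ((p + 3) * g + (p + 5)).
      rewrite expnD expnM; apply: leq_mul; first apply: expn_monob.
      + by rewrite expnD; have := expn_gt0 2 p; set q := 2 ^ p; lia.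
      + by rewrite expnD; have := expn_gt0 2 p; set q := 2 ^ p; lia.
    apply: leq_trans (expn_monob d.+1 e1) _; rewrite -expnM; apply: leq_pexp2l => //.
    nia.
  apply: leq_trans (leq_mul (leqnn (prog_size P)) hM) _; rewrite -mulnA leq_pmull //.
- apply: leq_trans (depth_prog_tr _ _) _; rewrite leq_pmull //.
- apply: leq_trans (prec_prog_tr _ _) _; rewrite leq_mul2r; apply/orP; right; done.
Qed.
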